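(* Let $L\ge1$ and put $u_\ell=e^{-2\mathcal{C}(\ell-1)/L}$ and $\pi_{(\ell)}=u_\ell/\sum_{\ell'=1}^L u_{\ell'}$ for $\ell=1,\dots,L$. Define, for $x\in[0,1]$, $$g_L(x)=\sum_{\ell=1}^L \pi_{(\ell)}\,\Phi\big(\mu(x,u_\ell\,\mathcal{C}'/R)\big),\qquad g(x)=\frac{2\mathcal{C}}{\nu}\int_0^1 e^{-2\mathcal{C}t}\,\Phi\big(\mu(x,e^{-2\mathcal{C}t}\mathcal{C}'/R)\big)\,dt .$$ Then $g_L(x)\ge g(x)$ for all $x\in[0,1]$, and moreover $g(x)=\frac1\nu\int_{1-\nu}^1\Phi\big(\mu(x,u\,\mathcal{C}'/R)\big)\,du$.
   Context: Fix an integer $M\ge2$, $snr=P/\sigma^2>0$, $\nu=snr/(1+snr)$, $\mathcal{C}=\tfrac12\ln(1+snr)$ (natural logarithm, so $e^{-2\mathcal{C}}=1-\nu$), constants $a\ge 0$, $\mathcal{C}'>0$, $R>0$. $\Phi,\phi$ denote the standard normal distribution function and density. For $x\in[0,1]$ and $u>0$, $$\mu(x,u)=\Big(\sqrt{u/(1-x\nu)}-1\Big)\sqrt{2\log M}-a.$$ *)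

(* Defs.v *)
From Stdlib Require Import Reals Lra ClassicalEpsilon.
Open Scope R_scope.

(* Riemann integral of f over [a,b] (oriented as in Stdlib's RiemannInt);
   defined by choice: the value of RiemannInt for any integrability proof
   (RiemannInt is proof-irrelevant). *)
Definition Rint (f : R -> R) (a b : R) : R :=
  epsilon (inhabits 0)
    (fun I => exists pr : Riemann_integrable f a b, RiemannInt pr = I).

Definition std_normal_pdf (t : R) : R := exp (- (t ^ 2) / 2) / sqrt (2 * PI).

Definition std_normal_cdf (z : R) : R :=
  epsilon (inhabits 0)
    (fun l => Un_cv (fun n => Rint std_normal_pdf (- INR n) z) l).

Definition nu_of (snr : R) : R := snr / (1 + snr).
Definition cap_of (snr : R) : R := / 2 * ln (1 + snr).

Definition mu (M : nat) (snr a x u : R) : R :=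
  (sqrt (u / (1 - x * nu_of snr)) - 1) * sqrt (2 * ln (INR M)) - a.

Definition u_l (snr : R) (L l : nat) : R :=
  exp (- 2 * cap_of snr * (INR l - 1) / INR L).

(* g_L(x) = sum_{l=1}^L pi_(l) Phi(mu(x, u_l C'/R)); index k = l-1 *)
Definition gL (M : nat) (snr a C' Rr : R) (L : nat) (x : R) : R :=
  let Z := sum_f_R0 (fun k => u_l snr L (S k)) (L - 1) in
  sum_f_R0 (fun k => (u_l snr L (S k) / Z) *
     std_normal_cdf (mu M snr a x (u_l snr L (S k) * C' / Rr))) (L - 1).

Definition g (M : nat) (snr a C' Rr : R) (x : R) : R :=
  2 * cap_of snr / nu_of snr *
  Rint (fun t => exp (- 2 * cap_of snr * t) *
          std_normal_cdf (mu M snr a x (exp (- 2 * cap_of snr * t) * C' / Rr))) 0 1.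

(* Main.v *)
Require Import Defs.
From Coquelicot Require Import Coquelicot.
From Stdlib Require Import Reals Lra Lia ClassicalEpsilon FunctionalExtensionality.
Open Scope R_scope.


Lemma Rint_RInt f a b : ex_RInt f a b -> Rint f a b = RInt f a b.
Proof.
  intros H. unfold Rint.
  destruct (epsilon_spec (inhabits 0) (fun I => exists pr : Riemann_integrable f a b, RiemannInt pr = I)) as [pr Hpr].
  { exists (RInt f a b). exists (ex_RInt_Reals_0 f a b H). symmetry. apply RInt_Reals. }
  rewrite <- Hpr. symmetry. apply RInt_Reals.
Qed.

Lemma pdf_cont t : continuous std_normal_pdf t.
Proof.
  apply (ex_derive_continuous (K:=R_AbsRing) (V:=R_NormedModule)). unfold std_normal_pdf. auto_derive. auto.
Qed.

Lemma pdf_pos t : 0 < std_normal_pdf t.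
Proof.
  unfold std_normal_pdf. apply Rdiv_lt_0_compat. apply exp_pos. apply sqrt_lt_R0. generalize PI_RGT_0; lra.
Qed.

Lemma exp_le' x y : x <= y -> exp x <= exp y.
Proof. intros [H|H]. left; apply exp_increasing; auto. subst; lra. Qed.

Lemma pdf_ex a b : ex_RInt std_normal_pdf a b.
Proof. apply (ex_RInt_continuous (V:=R_CompleteNormedModule)). intros; apply pdf_cont. Qed.

Lemma pdf_chasles a b c : RInt std_normal_pdf a b + RInt std_normal_pdf b c = RInt std_normal_pdf a c.
Proof. apply (RInt_Chasles (V:=R_CompleteNormedModule) std_normal_pdf); apply pdf_ex. Qed.

Lemma pdf_RInt_ge a b : a <= b -> 0 <= RInt std_normal_pdf a b.
Proof. intros. apply RInt_ge_0; auto. apply pdf_ex. intros; left; apply pdf_pos. Qed.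

Definition G (t : R) := exp (/2 + t) / sqrt (2 * PI).

Lemma G_der t : is_derive G t (G t).
Proof. unfold G. auto_derive. auto. lra. Qed.

Lemma bound_an n : RInt std_normal_pdf (- INR n) 0 <= G 0.
Proof.
  assert (E : RInt G (- INR n) 0 = G 0 - G (- INR n)).
  { apply is_RInt_unique. apply (is_RInt_derive (V:=R_CompleteNormedModule) G G). intros; apply G_der.
    intros; apply (ex_derive_continuous (K:=R_AbsRing) (V:=R_NormedModule)). eexists; apply G_der. }
  assert (0 < G (- INR n)). { unfold G. apply Rdiv_lt_0_compat. apply exp_pos. apply sqrt_lt_R0. generalize PI_RGT_0; lra. }
  apply Rle_trans with (RInt G (- INR n) 0); [|lra].
  apply RInt_le. generalize (pos_INR n); lra. apply pdf_ex.
  apply (ex_RInt_continuous (V:=R_CompleteNormedModule)). intros; apply (ex_derive_continuous (K:=R_AbsRing) (V:=R_NormedModule)). eexists; apply G_der.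
  intros t _. unfold std_normal_pdf, G. apply Rmult_le_compat_r.
  left; apply Rinv_0_lt_compat, sqrt_lt_R0; generalize PI_RGT_0; lra.
  apply exp_le'. assert (h := pow2_ge_0 (t+1)). simpl in *. nra.
Qed.

Lemma Phi_form : exists c, forall z, std_normal_cdf z = c + RInt std_normal_pdf 0 z.
Proof.
  set (an := fun n => RInt std_normal_pdf (- INR n) 0).
  destruct (growing_cv an) as [l Hl].
  { intro n. unfold an. rewrite <- (pdf_chasles (- INR (S n)) (- INR n) 0).
    assert (0 <= RInt std_normal_pdf (- INR (S n)) (- INR n)).
    apply pdf_RInt_ge. rewrite S_INR; lra. lra. }
  { exists (G 0). intros x [i ->]. apply bound_an. }
  exists l. intro z.
  assert (Hc : Un_cv (fun n => Rint std_normal_pdf (- INR n) z) (l + RInt std_normal_pdf 0 z)).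
  { apply Un_cv_ext with (fun n => an n + RInt std_normal_pdf 0 z).
    intro n. rewrite Rint_RInt by apply pdf_ex. unfold an. apply pdf_chasles.
    apply CV_plus. auto. intros e He. exists 0%nat. intros. unfold R_dist. rewrite Rminus_diag, Rabs_R0. auto. }
  unfold std_normal_cdf.
  eapply UL_sequence; [|exact Hc].
  apply (epsilon_spec (inhabits 0) (fun l0 => Un_cv (fun n => Rint std_normal_pdf (- INR n) z) l0)).
  exists (l + RInt std_normal_pdf 0 z); auto.
Qed.

Lemma Phi_cont z : continuous std_normal_cdf z.
Proof.
  destruct Phi_form as [c Hc].
  apply (continuous_ext (fun z => c + RInt std_normal_pdf 0 z)). intros; symmetry; apply Hc.
  apply (continuous_plus (K:=R_AbsRing) (V:=R_NormedModule) (fun _ => c) (RInt std_normal_pdf 0)).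
  apply continuous_const.
  apply (ex_derive_continuous (K:=R_AbsRing) (V:=R_NormedModule)).
  exists (std_normal_pdf z).
  apply (is_derive_RInt (V:=R_NormedModule) std_normal_pdf (RInt std_normal_pdf 0) 0).
  apply filter_forall. intros; apply (RInt_correct (V:=R_CompleteNormedModule)); apply pdf_ex.
  apply pdf_cont.
Qed.

Lemma Phi_mono z1 z2 : z1 <= z2 -> std_normal_cdf z1 <= std_normal_cdf z2.
Proof.
  intros H. destruct Phi_form as [c Hc]. rewrite !Hc.
  rewrite <- (pdf_chasles 0 z1 z2). generalize (pdf_RInt_ge _ _ H). lra.
Qed.

Definition hh M snr a C' Rr x u := std_normal_cdf (mu M snr a x (u * C' / Rr)).

Lemma hh_cont M snr a C' Rr x u : continuous (hh M snr a C' Rr x) u.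
Proof.
  unfold hh, mu.
  apply (continuous_comp (fun u => (sqrt (u * C' / Rr / (1 - x * nu_of snr)) - 1) * sqrt (2 * ln (INR M)) - a) std_normal_cdf).
  2: apply Phi_cont.
  apply (continuous_comp (fun u => sqrt (u * C' / Rr / (1 - x * nu_of snr))) (fun y => (y - 1) * sqrt (2 * ln (INR M)) - a)).
  apply continuous_sqrt_comp.
  apply (ex_derive_continuous (K:=R_AbsRing) (V:=R_NormedModule)). auto_derive. auto.
  apply (ex_derive_continuous (K:=R_AbsRing) (V:=R_NormedModule)). auto_derive. auto.
Qed.

Lemma hh_ex M snr a C' Rr x p q : ex_RInt (hh M snr a C' Rr x) p q.
Proof. apply (ex_RInt_continuous (V:=R_CompleteNormedModule)). intros; apply hh_cont. Qed.

Lemma hh_mono M snr a C' Rr x u v : 0 < snr -> 0 < C' -> 0 < Rr -> 0 <= x <= 1 ->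
  u <= v -> hh M snr a C' Rr x u <= hh M snr a C' Rr x v.
Proof.
  intros Hs HC HR Hx Huv. unfold hh, mu. apply Phi_mono.
  assert (0 < nu_of snr < 1). { unfold nu_of. split. apply Rdiv_lt_0_compat; lra.
    apply Rmult_lt_reg_r with (1 + snr). lra. field_simplify; lra. }
  assert (0 < 1 - x * nu_of snr) by nra.
  apply Rplus_le_compat_r. apply Rmult_le_compat_r. apply sqrt_pos.
  apply Rplus_le_compat_r. apply sqrt_le_1_alt.
  unfold Rdiv. apply Rmult_le_compat_r. left; apply Rinv_0_lt_compat; auto.
  apply Rmult_le_compat_r. left; apply Rinv_0_lt_compat; auto.
  apply Rmult_le_compat_r; lra.
Qed.

Lemma nu_bounds snr : 0 < snr -> 0 < nu_of snr < 1.
Proof. intros Hs. unfold nu_of. split. apply Rdiv_lt_0_compat; lra.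
  apply Rmult_lt_reg_r with (1 + snr). lra. field_simplify; lra. Qed.

Lemma cap_pos snr : 0 < snr -> 0 < cap_of snr.
Proof. intros. unfold cap_of. assert (0 < ln (1 + snr)) by (rewrite <- ln_1; apply ln_increasing; lra). lra. Qed.

Lemma exp_cap snr : 0 < snr -> exp (- 2 * cap_of snr) = 1 - nu_of snr.
Proof.
  intros. unfold cap_of, nu_of. replace (-2 * (/2 * ln (1 + snr))) with (- ln (1+snr)) by field.
  rewrite exp_Ropp, exp_ln by lra. field. lra.
Qed.

Lemma part2 M snr a C' Rr x : 0 < snr ->
  g M snr a C' Rr x = / nu_of snr * Rint (hh M snr a C' Rr x) (1 - nu_of snr) 1.
Proof.
  intros Hs. set (C := cap_of snr). set (h := hh M snr a C' Rr x).
  set (F := fun t => exp (- 2 * C * t) * h (exp (- 2 * C * t))).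
  assert (HF : ex_RInt F 0 1).
  { apply (ex_RInt_continuous (V:=R_CompleteNormedModule)). intros t _. unfold F.
    apply (continuous_mult (K:=R_AbsRing) (fun t => exp (-2*C*t)) (fun t => h (exp (-2*C*t)))).
    apply (ex_derive_continuous (K:=R_AbsRing) (V:=R_NormedModule)). auto_derive; auto.
    apply (continuous_comp (fun t => exp (-2*C*t)) h).
    apply (ex_derive_continuous (K:=R_AbsRing) (V:=R_NormedModule)). auto_derive; auto.
    apply hh_cont. }
  unfold g. fold C. change (2 * C / nu_of snr * Rint F 0 1 = / nu_of snr * Rint h (1 - nu_of snr) 1).
  rewrite (Rint_RInt F) by exact HF. rewrite Rint_RInt by apply hh_ex.
  assert (E : RInt (fun y => scal (-2*C*exp (-2*C*y)) (h (exp (-2*C*y)))) 0 1 = RInt h (exp (-2*C*0)) (exp (-2*C*1))).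
  { apply (RInt_comp (V:=R_CompleteNormedModule) h (fun t => exp (-2*C*t)) (fun t => -2*C*exp (-2*C*t))).
    - intros; apply hh_cont.
    - intros; split. auto_derive; auto. ring.
      apply (ex_derive_continuous (K:=R_AbsRing) (V:=R_NormedModule)). auto_derive; auto. }
  rewrite (RInt_ext _ (fun y => scal (-2*C) (F y))) in E.
  2:{ intros. unfold F. set (e := exp (-2*C*x0)). set (hv := h e). clearbody e hv. unfold scal; simpl; unfold mult; simpl. ring. }
  rewrite (RInt_scal (V:=R_CompleteNormedModule)) in E by exact HF.
  replace (exp (-2*C*0)) with 1 in E by (rewrite Rmult_0_r; symmetry; apply exp_0).
  replace (exp (-2*C*1)) with (1 - nu_of snr) in E by (replace (-2*C*1) with (-2*C) by ring; unfold C; symmetry; apply exp_cap; auto).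
  rewrite <- (opp_RInt_swap (V:=R_CompleteNormedModule) h (1 - nu_of snr) 1) in E by apply hh_ex.
  change (-2 * C * RInt F 0 1 = - RInt h (1 - nu_of snr) 1) in E.
  rewrite <- (Ropp_involutive (RInt h (1 - nu_of snr) 1)), <- E.
  generalize (nu_bounds snr Hs). intros. field. lra.
Qed.

Lemma part1 M snr a C' Rr m x : 0 < snr -> 0 < C' -> 0 < Rr -> 0 <= x <= 1 ->
  gL M snr a C' Rr (S m) x >= / nu_of snr * Rint (hh M snr a C' Rr x) (1 - nu_of snr) 1.
Proof.
  intros Hs HC HR Hx.
  set (C := cap_of snr). set (nu := nu_of snr). set (h := hh M snr a C' Rr x).
  set (w := fun k => u_l snr (S m) (S k)).
  set (q := exp (-2 * C / INR (S m))).
  assert (HCp : 0 < C) by (apply cap_pos; auto).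
  assert (Hnu : 0 < nu < 1) by (apply nu_bounds; auto).
  assert (HLp : 0 < INR (S m)) by (apply lt_0_INR; lia).
  assert (Hq : 0 < q < 1).
  { split. apply exp_pos. rewrite <- exp_0. apply exp_increasing.
    unfold Rdiv. assert (0 < / INR (S m)) by (apply Rinv_0_lt_compat; auto). nra. }
  assert (W1 : forall k, w (S k) = q * w k).
  { intro k. unfold w, u_l, q. rewrite <- exp_plus. f_equal.
    rewrite (S_INR (S k)). fold C. field. lra. }
  assert (W0 : w 0%nat = 1).
  { unfold w, u_l. rewrite S_INR, INR_0. replace (-2 * cap_of snr * (0 + 1 - 1) / INR (S m)) with 0 by (field; lra). apply exp_0. }
  assert (Wm : w (S m) = 1 - nu).
  { unfold w, u_l, nu. rewrite <- exp_cap by auto. f_equal. fold C.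
    rewrite (S_INR (S m)). field. lra. }
  assert (Wpos : forall k, 0 < w k) by (intro; apply exp_pos).
  assert (Tele : forall n, sum_f_R0 (fun k => w k - w (S k)) n = w 0%nat - w (S n)).
  { induction n. simpl. ring. simpl sum_f_R0. rewrite IHn. ring. }
  set (Z := sum_f_R0 w m).
  assert (HZ : (1 - q) * Z = nu).
  { unfold Z. rewrite scal_sum.
    replace nu with (w 0%nat - w (S m)) by (rewrite W0, Wm; ring).
    rewrite <- Tele. apply sum_eq. intros. rewrite W1. ring. }
  assert (HZp : 0 < Z).
  { assert (0 < (1 - q) * Z) by lra. apply Rmult_lt_reg_l with (1 - q). lra. lra. }
  assert (Split : forall n, RInt h (w (S n)) (w 0%nat) = sum_f_R0 (fun k => RInt h (w (S k)) (w k)) n).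
  { induction n. reflexivity. simpl sum_f_R0. rewrite <- IHn.
    assert (Hc : RInt h (w (S (S n))) (w (S n)) + RInt h (w (S n)) (w 0%nat) = RInt h (w (S (S n))) (w 0%nat))
      by (apply (RInt_Chasles (V:=R_CompleteNormedModule)); apply hh_ex).
    rewrite <- Hc. match goal with |- ?A = ?B => change (@eq R A B) end. ring. }
  assert (Piece : forall k, RInt h (w (S k)) (w k) <= (1 - q) * w k * h (w k)).
  { intro k. assert (E : (1 - q) * w k * h (w k) = RInt (fun _ => h (w k)) (w (S k)) (w k)).
    { rewrite (RInt_const (V:=R_CompleteNormedModule)). change (scal ?u ?v) with (u * v).
      rewrite W1. ring. }
    rewrite E. apply RInt_le.
    rewrite W1. generalize (Wpos k); nra.
    apply hh_ex. apply (ex_RInt_const (V:=R_CompleteNormedModule)).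
    intros y Hy. apply hh_mono; auto. lra. }
  replace (gL M snr a C' Rr (S m) x) with (sum_f_R0 (fun k => w k / Z * h (w k)) m).
  2:{ unfold gL. replace (S m - 1)%nat with m by lia. reflexivity. }
  fold nu h. rewrite Rint_RInt by apply hh_ex.
  rewrite <- Wm, <- W0, Split, scal_sum.
  apply Rle_ge, sum_Rle. intros k _.
  replace (w k / Z * h (w k)) with ((1 - q) * w k * h (w k) * / nu).
  2:{ rewrite <- HZ. field. split; lra. }
  apply Rmult_le_compat_r. left; apply Rinv_0_lt_compat; lra. apply Piece.
Qed.

Theorem mainTheorem3 (M : nat) (snr a C' Rr : R) (L : nat)
  (hM : (2 <= M)%nat) (hsnr : 0 < snr) (ha : 0 <= a) (hC' : 0 < C') (hR : 0 < Rr)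
  (hL : (1 <= L)%nat) :
  forall x : R, 0 <= x <= 1 ->
    gL M snr a C' Rr L x >= g M snr a C' Rr x /\
    g M snr a C' Rr x =
      / nu_of snr * Rint (fun u => std_normal_cdf (mu M snr a x (u * C' / Rr)))
                          (1 - nu_of snr) 1.
Proof.
  intros x Hx. destruct L as [|m]. lia.
  split.
  - rewrite part2 by auto. apply part1; auto.
  - exact (part2 M snr a C' Rr x hsnr).
Qed.
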